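(* Let $M \geq 1$ be an integer and let $V = (\mathbb{Z}/2\mathbb{Z})^{F(M)}$. Then there are vectors $\xi_1,\dots,\xi_M \in V$ such that every subset of $\{\xi_1,\dots,\xi_M\}$ consisting of at least $95$ percent of them (i.e. of at least $0.95M$ of the indices) spans $V$.
   Context: For a positive integer $M$, $F(M) = M$ if $M \leq 19$ and $F(M) = \lfloor M/4 \rfloor$ if $M \geq 20$. *)

(* Defs.v *)
From mathcomp Require Import all_boot all_algebra.
Set Implicit Arguments. Unset Strict Implicit. Unset Printing Implicit Defensive.

Definition F (M : nat) : nat := if M <= 19 then M else M %/ 4.

(* Main.v *)
Require Import Defs.
From mathcomp Require Import all_boot all_algebra.
From mathcomp Require Import zify.
Set Implicit Arguments. Unset Strict Implicit. Unset Printing Implicit Defensive.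
Import GRing.Theory.

Lemma union_bound (U I : finType) (P : pred U) (A : I -> pred U) :
  (forall x, P x -> exists i, x \in A i) -> #|P| <= \sum_i #|A i|.
Proof.
move=> H.
have E : forall i, #|A i| = \sum_x (x \in A i : nat).
  by move=> i; rewrite -sum1_card big_mkcond.
under eq_bigr do rewrite E.
rewrite exchange_big /= -sum1_card big_mkcond /=.
apply: leq_sum => x _.
case: ifP => // Px.
have [i Hi] := H x Px.
by rewrite (bigD1 i) //= Hi.
Qed.

Local Open Scope ring_scope.

Lemma F2_cases (x : 'F_2) : x = 0 \/ x = 1.
Proof. case: x => [[|[|]]] //= Hx; [left|right]; by apply/val_inj. Qed.

Lemma cV_nz k (y : 'cV['F_2]_k) : y != 0 -> exists j, y j 0 = 1.
Proof.
move=> Hy.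
have [j Hj]: exists j, y j 0 != 0.
  apply/existsP; apply: contraR Hy => /existsPn H.
  apply/eqP/matrixP => i l; rewrite ord1 mxE; exact/eqP/negPn/H.
exists j; case: (F2_cases (y j 0)) Hj => -> //; by rewrite eqxx.
Qed.

Lemma ker_card k (y : 'cV['F_2]_k) : y != 0 ->
  (#|[set v : 'rV['F_2]_k | v *m y == 0%R]| * 2 = 2 ^ k)%N.
Proof.
move=> /cV_nz [j Hj].
set K := [set v : 'rV['F_2]_k | v *m y == 0].
pose phi (v : 'rV['F_2]_k) := v + delta_mx 0 j.
have phiK : involutive phi.
  move=> v; rewrite /phi -addrA.
  have -> : delta_mx 0 j + delta_mx 0 j = 0 :> 'rV['F_2]_k.
    apply/matrixP => a b; rewrite !mxE; case: (_ && _); [by apply/val_inj | by rewrite addr0].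
  by rewrite addr0.
have phi_inj : injective phi by apply: inv_inj.
have key : forall v, (phi v *m y == 0) = ~~ (v *m y == 0).
  move=> v; rewrite /phi mulmxDl -rowE.
  have E : forall m : 'M['F_2]_1, (m == 0) = (m 0 0 == 0).
    move=> m; apply/eqP/eqP => [->|H]; first by rewrite mxE.
    by apply/matrixP => a b; rewrite !ord1 H mxE.
  rewrite !E; have -> : ((v *m y + row j y) 0 0) = (v *m y) 0 0 + y j 0 by rewrite !mxE.
  rewrite Hj; case: (F2_cases ((v *m y) 0 0)) => -> //.
have c1 : (#|~: K| <= #|K|)%N.
  rewrite -(card_imset _ phi_inj); apply: subset_leq_card.
  apply/subsetP => w /imsetP [v]; rewrite !inE => Hv ->; by rewrite key.
have c2 : (#|K| <= #|~: K|)%N.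
  rewrite -(card_imset _ phi_inj); apply: subset_leq_card.
  apply/subsetP => w /imsetP [v]; rewrite !inE => Hv ->; by rewrite key Hv.
have : (#|K| + #|~: K| = 2 ^ k)%N.
  rewrite cardsC card_mx card_Fp // mul1n.
  done.
lia.
Qed.

Lemma span_full k (s : seq 'rV['F_2]_k) :
  (forall y : 'cV['F_2]_k, y != 0 -> exists2 v, v \in s & v *m y != 0) ->
  <<s>>%VS = fullv.
Proof.
move=> H.
pose A := \matrix_(i < size s) s`_i.
have rf : row_full A.
  apply: contraT => nrf.
  have rk : (\rank A < k)%N by rewrite ltn_neqAle nrf rank_leq_col.
  have cz : cokermx A != 0.
    by rewrite -mxrank_eq0 mxrank_coker subn_eq0 -ltnNge.
  have [j Hj] : exists j, col j (cokermx A) != 0.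
    apply/existsP; apply: contraR cz => /existsPn Hc; apply/eqP/matrixP => a b.
    have /eqP/matrixP/(_ a 0) := negPn (Hc b).
    by rewrite !mxE.
  have [v vs Hv] := H _ Hj.
  have HA : A *m col j (cokermx A) = 0 by rewrite colE mulmxA mulmx_coker mul0mx.
  have iv : (index v s < size s)%N by rewrite index_mem.
  have ev : v = row (Ordinal iv) A by rewrite rowK /= nth_index.
  by move: Hv; rewrite ev -row_mul HA row0 eqxx.
apply/vspaceP => v; rewrite memvf.
have /submxP [x ->] : (v <= A)%MS by apply: submx_full.
rewrite mulmx_sum_row; apply: memv_suml => i _; apply: memvZ.
rewrite rowK; apply: memv_span; apply: mem_nth; exact: ltn_ord.
Qed.

Lemma card_fam M k (D : 'I_M -> {set 'rV['F_2]_k}) :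
  #|[pred G : {ffun 'I_M -> 'rV['F_2]_k} | [forall i, G i \in D i]]| = (\prod_i #|D i|)%N.
Proof.
have -> : #|[pred G : {ffun 'I_M -> 'rV['F_2]_k} | [forall i, G i \in D i]]|
   = #|family (fun i => [pred v | v \in D i])|.
  apply: eq_card => G; by rewrite !inE.
rewrite (_ : #|family _| = foldr muln 1 [seq #|[pred v | v \in D x]| | x : 'I_M]); last exact: (@card_family _ (fun _ => _)).
rewrite foldrE big_map big_enum /=.
by apply: eq_bigr => i _; apply: eq_card => v; rewrite !inE.
Qed.

Lemma exists_good (M k t : nat) :
  (t <= M)%N ->
  ((2^k - 1) * #|[set T : {set 'I_M} | (#|T| <= t)%N]| < 2^(M - t))%N ->
  exists G : 'I_M -> 'rV['F_2]_k, forall y : 'cV['F_2]_k, y != 0 ->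
    forall T : {set 'I_M}, (#|T| <= t)%N -> exists2 i, i \notin T & G i *m y != 0.
Proof.
move=> htM hnum.
pose U := {ffun 'I_M -> 'rV['F_2]_k}.
pose Ds (y : 'cV['F_2]_k) (T : {set 'I_M}) i :=
  if i \in T then [set: 'rV['F_2]_k] else [set v : 'rV['F_2]_k | v *m y == 0].
pose A (p : 'cV['F_2]_k * {set 'I_M}) : pred U :=
  if (p.1 != 0%R) && (#|p.2| <= t)%N then [pred G : U | [forall i, G i \in Ds p.1 p.2 i]]
  else pred0.
pose N := #|[set T : {set 'I_M} | (#|T| <= t)%N]|.
have cardU : #|U| = ((2^k)^M)%N by rewrite card_ffun card_mx card_Fp // mul1n card_ord.
have bnd : forall p, (#|A p| * 2^(M - t) <= if (p.1 != 0%R) && (#|p.2| <= t)%N then (2^k)^M else 0)%N.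
  case=> y T; rewrite /A /=.
  case: ifP => [/andP [Hy HT] | _]; last by rewrite card0.
  rewrite card_fam.
  have e1 : (M - t <= #|~: T|)%N.
    have := cardsC T; rewrite card_ord; move: HT => /= HT; lia.
  apply: (@leq_trans (\prod_i #|Ds y T i| * 2 ^ #|~: T|)%N).
    by rewrite leq_mul2l leq_pexp2l // orbT.
  rewrite -prod_nat_const.
  rewrite (big_mkcond (fun i => i \in ~: T)) /= -big_split /=.
  have -> : ((2^k)^M = \prod_(i < M) 2^k)%N by rewrite prod_nat_const card_ord.
  apply: eq_leq; apply: eq_bigr => i _; rewrite /Ds inE.
  case: ifP => _ /=.
    by rewrite cardsT card_mx card_Fp // mul1n muln1.
  exact: ker_card.
have sumb : (\sum_p #|A p| < (2^k)^M)%N.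
  rewrite -(ltn_pmul2r (expn_gt0 2 (M - t))) big_distrl /=.
  apply: (@leq_ltn_trans (\sum_(p : 'cV['F_2]_k * {set 'I_M}) (if (p.1 != 0%R) && (#|p.2| <= t)%N then (2^k)^M else 0))%N).
    by apply: leq_sum => p _; exact: bnd.
  rewrite -big_mkcond sum_nat_const /=.
  have -> : #|[pred p : 'cV['F_2]_k * {set 'I_M} | (p.1 != 0%R) && (#|p.2| <= t)%N]|
            = #|setX [set y : 'cV['F_2]_k | y != 0%R] [set T : {set 'I_M} | (#|T| <= t)%N]|.
    by apply: eq_card => p; rewrite !inE.
  rewrite cardsX.
  have -> : #|[set y : 'cV['F_2]_k | y != 0%R]| = (2^k - 1)%N.
    have E := cardC1 (0%R : 'cV['F_2]_k).
    rewrite card_mx card_Fp // muln1 in E.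
    rewrite subn1 -E; by apply: eq_card => y; rewrite !inE.
  by rewrite [X in (X < _)%N]mulnC ltn_pmul2l ?expn_gt0.
case: (boolP [exists G : U, [forall p, G \notin A p]]) => [/existsP [G HG] | H].
  exists (fun i => G i) => y Hy T HT.
  have := forallP HG (y, T); rewrite /A /= Hy HT /= inE => /forallPn [i].
  rewrite /Ds; case: ifP => Hi; first by rewrite inE.
  by rewrite inE => Hn; exists i; rewrite ?Hi.
exfalso.
have : (#|U| <= \sum_p #|A p|)%N.
  apply: (@leq_trans #|(predT : pred U)|); first by apply: subset_leq_card; apply/subsetP.
  apply: union_bound => G _.
  move/existsPn: H => /(_ G) /forallPn [p]; rewrite negbK => Hp; by exists p.
by rewrite cardU leqNgt sumb.
Qed.

Lemma binom_bound (M t : nat) : (t <= M)%N ->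
  (#|[set T : {set 'I_M} | (#|T| <= t)%N]| * 19 ^ (M - t) <= 20 ^ M)%N.
Proof.
move=> htM.
pose B (j : 'I_M.+1) : pred {set 'I_M} := fun T => (j <= t)%N && (#|T| == j).
have h1 : (#|[set T : {set 'I_M} | (#|T| <= t)%N]| <= \sum_j #|B j|)%N.
  apply: union_bound => T HT.
  have {}HT : (#|T| <= t)%N by have : T \in [set T : {set 'I_M} | (#|T| <= t)%N] := HT; rewrite inE.
  have HTM : (#|T| < M.+1)%N by have := subset_leq_card (subsetT T); rewrite cardsT card_ord.
  by exists (Ordinal HTM); rewrite /B unfold_in /= HT eqxx.
apply: (leq_trans (leq_mul h1 (leqnn _))).
rewrite big_distrl /= (_ : 20 = 19 + 1)%N // expnDn.
apply: leq_sum => j _.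
rewrite /B; case: (boolP (j <= t)%N) => Hj; last first.
  by rewrite eq_card0 // => T; rewrite unfold_in /= (negbTE Hj).
rewrite (eq_card (B := [set T : {set 'I_M} | #|T| == j])); last by move=> T; rewrite inE.
rewrite card_draws card_ord exp1n muln1 leq_mul2l leq_pexp2l //; last first.
  by apply: leq_sub2l.
by rewrite orbT.
Qed.

Lemma numeric (M : nat) : (1 <= M)%N ->
  ((2 ^ (if (M <= 19)%N then M else M %/ 4) - 1) *
     #|[set T : {set 'I_M} | (#|T| <= M %/ 20)%N]| < 2 ^ (M - M %/ 20))%N.
Proof.
move=> hM.
case: ifP => hM19.
  have -> : (M %/ 20 = 0)%N by rewrite divn_small // ltnS.
  have hN : (#|[set T : {set 'I_M} | (#|T| <= 0)%N]| <= 1)%N.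
    rewrite -(cards1 (set0 : {set 'I_M})); apply: subset_leq_card.
    apply/subsetP => T; rewrite !inE leqn0 cards_eq0 => /eqP ->; by rewrite eqxx.
  apply: (@leq_ltn_trans ((2^M - 1) * 1)%N); first by rewrite leq_mul2l hN orbT.
  rewrite muln1 subn0; have := expn_gt0 2 M; lia.
set k := (M %/ 4)%N; set t := (M %/ 20)%N.
have htM : (t <= M)%N by rewrite /t leq_div.
have hb := binom_bound htM.
set N := #|_| in hb *.
have P : (2^k * 20^M < 2^(M-t) * 19^(M-t))%N.
  rewrite -(@ltn_exp2r _ _ 20); last by [].
  rewrite !expnMn -!expnM.
  have e1 : (2^(k*20) * 20^(M*20) <= (2^5 * 20^20)^M)%N.
    rewrite expnMn -!expnM [(20*M)%N]mulnC leq_mul2r; apply/orP; right.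
    apply: leq_pexp2l => //; rewrite /k; lia.
  have e2 : ((2^5 * 20^20)^M < (2^19 * 19^19)^M)%N.
    rewrite ltn_exp2r; [lia | exact: hM].
  have e3 : ((2^19 * 19^19)^M <= 2^((M-t)*20) * 19^((M-t)*20))%N.
    have -> : ((2^19 * 19^19)^M = 2^(19*M) * 19^(19*M))%N by rewrite expnMn !expnM.
    have h19 : (19 * M <= (M - t) * 20)%N by rewrite /t; lia.
    exact: (leq_mul (leq_pexp2l (isT : (0 < 2)%N) h19) (leq_pexp2l (isT : (0 < 19)%N) h19)).
  exact: (leq_ltn_trans e1 (leq_trans e2 e3)).
have Q : (2^k * N < 2^(M-t))%N.
  rewrite -(@ltn_pmul2r (19^(M-t))) ?expn_gt0 //.
  apply: (leq_ltn_trans _ P); rewrite -mulnA leq_mul2l hb orbT //.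
apply: (leq_ltn_trans _ Q); rewrite leq_mul2r leq_subr orbT //.
Qed.

Theorem lemma9p1 (M : nat) (hM : (1 <= M)%N) :
  exists xi : 'I_M -> 'rV['F_2]_(F M),
    forall S : {set 'I_M}, (19 * M <= 20 * #|S|)%N ->
      (<<[seq xi i | i in S]>>)%VS = fullv.
Proof.
have hnum := numeric hM.
have [G HG] := exists_good (leq_div M 20) hnum.
exists G => S HS.
apply: span_full => y Hy.
have HT : (#|~: S| <= M %/ 20)%N.
  have := cardsC S; rewrite card_ord => E.
  rewrite leq_divRL //; lia.
have [i Hi HGi] := HG y Hy (~: S) HT.
exists (G i) => //.
apply: map_f; rewrite mem_enum; move: Hi; by rewrite inE negbK.
Qed.
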